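(* Let $p$ be an odd prime, let $\Delta\in\mathbb{Z}$ with $\Delta\equiv 3\pmod 4$ be a quadratic non-residue modulo $p$, and let $\mathfrak{p}=p\mathbb{Z}[\sqrt{\Delta}]$. Let $A_p=\prod_{0\le k\le p-1}(k+\sqrt{\Delta})$. Then $$A_p^{\frac{(p-1)(p-3)}{4}}\equiv\begin{cases}\Delta^{-\frac{p-1}{4}}\pmod{\mathfrak{p}}&\text{if } p\equiv 1\pmod 4,\\ (-1)^{\frac{p-3}{4}}\pmod{\mathfrak{p}}&\text{if } p\equiv 3\pmod 4,\end{cases}$$ where $\Delta^{-1}$ denotes the inverse of $\Delta$ modulo $p$. *)

(* Defs.v *)
(* Z[sqrt D] modelled concretely as pairs (a,b) = a + b*sqrt D. *)
From mathcomp Require Import all_boot all_order all_algebra.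
Set Implicit Arguments. Unset Strict Implicit. Unset Printing Implicit Defensive.
Import Order.TTheory GRing.Theory Num.Theory.
Local Open Scope ring_scope.

Definition zsq_mul (D : int) (x y : int * int) : int * int :=
  (x.1 * y.1 + D * (x.2 * y.2), x.1 * y.2 + x.2 * y.1).

Definition zsq_exp (D : int) (x : int * int) (n : nat) : int * int :=
  iter n (zsq_mul D x) (1, 0).

Definition A_prod (D : int) (p : nat) : int * int :=
  foldr (fun k acc => zsq_mul D (k%:Z, 1) acc) (1, 0) (iota 0 p).

(* congruence modulo the ideal p Z[sqrt D]:  x - y in p Z[sqrt D] *)
Definition zsq_cong (p : nat) (x y : int * int) : bool :=
  (p%:Z %| x.1 - y.1)%Z && (p%:Z %| x.2 - y.2)%Z.

(* Main.v *)
Require Import Defs.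
From mathcomp Require Import all_boot all_order all_algebra all_field.
From mathcomp Require Import ring lra zify.
Import Order.TTheory GRing.Theory Num.Theory.
Local Open Scope ring_scope.

Lemma sqrrN1 (R : pzRingType) : (-1 : R) ^+ 2 = 1.
Proof. by rewrite sqrrN expr1n. Qed.


Lemma alg1 (K : fieldType) (d u two : K) (m' : nat) :
  u * d = 1 -> d ^+ (2 * m'.+1) = -1 -> two ^+ (2 * m'.+1) = (-1) ^+ m'.+1 ->
  (two * two * d) ^+ (m'.+1 * (2 * m' + 1)) = u ^+ m'.+1.
Proof.
set m := m'.+1 => hu hd ht.
have Hd : d ^+ (m * (2 * m' + 1)) = (-1) ^+ m * u ^+ m.
  have E1 : d ^+ (m * (2 * m' + 1)) * d ^+ m = (-1) ^+ m.
    have e : ((2 * m' + 1).+1 = 2 * m)%N by rewrite /m; lia.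
    by rewrite -exprD -mulnSr e mulnC exprM hd.
  by rewrite -E1 -mulrA -exprMn (mulrC d u) hu expr1n mulr1.
rewrite !exprMn -expr2 Hd -exprM mulnC mulnA exprM ht.
by rewrite exprD exprM sqrr_sign expr1n mul1r expr1 mulrA -expr2 sqrr_sign mul1r.
Qed.

Lemma alg2 (K : fieldType) (d two : K) (m : nat) :
  two ^+ (2 * (2 * m + 1)) = 1 -> d ^+ (2 * m + 1) = -1 ->
  (two * two * d) ^+ (m * (2 * m + 1)) = (-1) ^+ m.
Proof.
move=> ht hd.
have e : (m * (2 * m + 1) * 2 = (2 * (2 * m + 1)) * m)%N by nia.
rewrite !exprMn -expr2 -exprM e exprM ht expr1n mul1r.
by rewrite mulnC exprM hd.
Qed.

Section Main.
Variable p : nat.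
Hypothesis pP : prime p.
Local Notation F := 'F_p.
Variable D : int.

Lemma intr0P (z : int) : ((z%:~R : F) == 0) = (p%:Z %| z)%Z.
Proof.
rewrite /dvdz /=.
case: z => n.
  by rewrite /= -(dvdn_pcharf (pchar_Fp pP)).
by rewrite NegzE mulrNz oppr_eq0 /= -(dvdn_pcharf (pchar_Fp pP)).
Qed.

Definition phi (x : int * int) : 'M[F]_2 :=
  \matrix_(i < 2, j < 2)
    (if i == j then x.1%:~R else if i == 0 then (D * x.2)%:~R else x.2%:~R).

Lemma phiM x y : phi (zsq_mul D x y) = phi x * phi y.
Proof.
apply/matrixP => i j; rewrite !mxE !big_ord_recr big_ord0 !mxE.
case: x y => [a b] [c d] /=.
move: i j => [[|[|?]] ?] [[|[|?]] ?] //=;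
rewrite ?add0r ?intrD ?intrM; try ring.
Qed.

Lemma phi1 : phi (1, 0) = 1.
Proof.
apply/matrixP => i j; rewrite !mxE.
by move: i j => [[|[|?]] ?] [[|[|?]] ?] //=; rewrite ?mulr0.
Qed.

Lemma phiX x n : phi (zsq_exp D x n) = phi x ^+ n.
Proof.
elim: n => [|n IH]; first by rewrite expr0 phi1.
by rewrite exprS -IH /zsq_exp iterS phiM.
Qed.


Definition nF (x : int * int) : F := x.1%:~R ^+ 2 - D%:~R * x.2%:~R ^+ 2.

Lemma nFM x y : nF (zsq_mul D x y) = nF x * nF y.
Proof. case: x y => [a b] [c d]; rewrite /nF /= !intrD !intrM; ring. Qed.

Lemma nF_A s : nF (foldr (fun k acc => zsq_mul D (k%:Z, 1) acc) (1, 0) s)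
   = \prod_(k <- s) ((k%:R : F) ^+ 2 - D%:~R).
Proof.
elim: s => [|k s IH] /=; first by rewrite big_nil /nF /= expr0n /= mulr0 subr0 expr1n.
by rewrite big_cons nFM IH /nF /= expr1n mulr1.
Qed.

Lemma phi_A s : phi (foldr (fun k acc => zsq_mul D (k%:Z, 1) acc) (1, 0) s)
   = \prod_(k <- s) phi (k%:Z, 1).
Proof.
elim: s => [|k s IH] /=; first by rewrite big_nil phi1.
by rewrite big_cons phiM IH.
Qed.

Definition Sm := phi (0, 1).

Lemma phi_k (k : nat) : phi (k%:Z, 1) = horner_mx Sm ('X + (k%:R : F)%:P).
Proof.
rewrite rmorphD /= horner_mx_X horner_mx_C.
apply/matrixP => i j; rewrite !mxE.
by move: i j => [[|[|?]] ?] [[|[|?]] ?] //=; rewrite ?mulr0 ?add0r ?addr0.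
Qed.

Lemma Sm2 : Sm ^+ 2 = (D%:~R : F)%:M.
Proof.
rewrite expr2 -phiM /zsq_mul /=.
apply/matrixP => i j; rewrite !mxE.
by move: i j => [[|[|?]] ?] [[|[|?]] ?] //=; rewrite ?mulr0 ?add0r ?addr0 ?mulr1.
Qed.

Lemma prod_poly : \prod_(k <- iota 0 p) ('X + (k%:R : F)%:P) = 'X^p - 'X.
Proof.
transitivity ('X^#|F| - 'X : {poly F}); last by rewrite card_Fp.
rewrite finField_genPoly.
rewrite (reindex_inj oppr_inj) /=.
have H1 : forall j : F, 'X - (- j)%:P = 'X + j%:P.
  by move=> j; rewrite polyCN opprK.
rewrite [RHS](eq_bigr _ (fun j _ => H1 j)).
have E : iota 0 p = index_iota 0 (Zp_trunc (pdiv p)).+2.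
  by rewrite Fp_cast // /index_iota subn0.
rewrite E big_mkord.
by apply: eq_bigr => i _; rewrite natr_Zp.
Qed.


Lemma phi00 x : phi x 0 0 = x.1%:~R. Proof. by rewrite mxE. Qed.
Lemma phi10 x : phi x 1 0 = x.2%:~R. Proof. by rewrite mxE. Qed.

Lemma cong_phi x y : phi x = phi y -> zsq_cong p x y.
Proof.
move=> E; have E1 := congr1 (fun M : 'M[F]_2 => M 0 0) E; have E2 := congr1 (fun M : 'M[F]_2 => M 1 0) E.
rewrite /= !phi00 in E1; rewrite /= !phi10 in E2.
by apply/andP; split; rewrite -intr0P intrB subr_eq0 ?E1 ?E2.
Qed.

Lemma phi_scal a : phi (a, 0) = (a%:~R : F)%:M.
Proof.
apply/matrixP => i j; rewrite !mxE.
by move: i j => [[|[|?]] ?] [[|[|?]] ?] //=; rewrite ?mulr0.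
Qed.

Lemma fermat (x : F) : x != 0 -> x ^+ p.-1 = 1.
Proof.
move=> xnz; have := expf_card x; rewrite card_Fp // => E.
by apply: (mulIf xnz); rewrite mul1r -exprSr prednK ?prime_gt0.
Qed.

Hypothesis nr : forall x : int, ~~ (p%:Z %| x ^+ 2 - D)%Z.
Hypothesis podd : odd p.

Lemma Dnz : (D%:~R : F) != 0.
Proof. by have := nr 0; rewrite expr0n /= sub0r -intr0P rmorphN oppr_eq0. Qed.

Let h := p./2.
Lemma p_eq : p = h.*2.+1.
Proof. by rewrite /h -{1}(odd_double_half p) podd. Qed.

Let c := (D%:~R : F) ^+ h.

Lemma c2 : c ^+ 2 = 1.
Proof.
have E : h.*2 = p.-1 by rewrite [in RHS]p_eq.
by rewrite /c -exprM muln2 E (fermat _ Dnz).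
Qed.

Lemma SmOdd n : Sm ^+ n.*2.+1 = ((D%:~R : F) ^+ n)%:M * Sm.
Proof. by rewrite exprSr -muln2 mulnC exprM Sm2 -rmorphXn. Qed.

Lemma Smp : Sm ^+ p = c%:M * Sm.
Proof.
by have := SmOdd h; rewrite -p_eq.
Qed.

Lemma prodA : phi (A_prod D p) = Sm ^+ p - Sm.
Proof.
rewrite /A_prod phi_A.
under eq_bigr do rewrite phi_k.
by rewrite -rmorph_prod prod_poly rmorphB /= rmorphXn /= horner_mx_X.
Qed.

Lemma cN1 : c = -1.
Proof.
have : (c - 1) * (c + 1) = 0 by rewrite -subr_sqr c2 expr1n subrr.
move/eqP; rewrite mulf_eq0 => /orP [|]; last by rewrite addr_eq0 => /eqP.
rewrite subr_eq0 => /eqP c1.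
have A0 : phi (A_prod D p) = 0 by rewrite prodA Smp c1 mul1r subrr.
have : nF (A_prod D p) = 0.
  rewrite /nF -phi00 -phi10 A0 !mxE; by rewrite expr0n /= mulr0 subr0.
rewrite /A_prod nF_A => /eqP H; exfalso; move: H; apply/negP.
rewrite prodf_seq_neq0; apply/allP => k _ /=.
have := nr k; rewrite -intr0P intrB rmorphXn /=.
by [].
Qed.


Lemma phiA_eq : phi (A_prod D p) = phi (0, -2).
Proof.
rewrite prodA Smp cN1.
have -> : (-1 : F)%:M = phi (-1, 0) by rewrite phi_scal rmorphN1.
rewrite /Sm -phiM.
apply/matrixP => i j; rewrite !mxE.
by move: i j => [[|[|?]] ?] [[|[|?]] ?] //=; rewrite ?intrD ?intrM ?intrB /=; ring.
Qed.

Lemma phiA_pow t : phi (zsq_exp D (A_prod D p) (2 * t)) = (((4 * D)%:~R : F) ^+ t)%:M.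
Proof.
rewrite phiX phiA_eq exprM expr2 -phiM.
have -> : zsq_mul D (0, -2) (0, -2) = (4 * D, 0).
  by rewrite /zsq_mul /=; congr pair; ring.
by rewrite phi_scal rmorphXn.
Qed.

Lemma fact_F n : (n`!%:R : F) = \prod_(i < n) (i.+1)%:R.
Proof.
elim: n => [|n IH]; first by rewrite big_ord0.
by rewrite factS natrM big_ord_recr /= IH mulrC.
Qed.

Lemma two_nz : (2%:R : F) != 0.
Proof.
rewrite -(dvdn_pcharf (pchar_Fp pP)); apply/negP => /(dvdn_leq (isT : (0 < 2)%N)) le2.
have := prime_gt1 pP => gt1.
have E : p = 2 by lia.
by move: podd; rewrite E.
Qed.

Lemma sqrtm1 m : p = (4 * m).+1 -> exists w : F, w ^+ 2 = -1.
Proof.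
move=> pE.
have W : (p %| (p.-1)`!.+1)%N by rewrite -Wilson ?prime_gt1.
move: W; rewrite (dvdn_pcharf (pchar_Fp pP)) mulrSr addr_eq0 => /eqP.
have -> : p.-1 = (2 * m + 2 * m)%N by rewrite [in LHS]pE; lia.
rewrite fact_F big_split_ord /= [X in _ * X](reindex_inj rev_ord_inj) /=.
set w := \prod_(i < 2 * m) (i.+1)%:R : F.
have H : forall i : 'I_(2 * m), ((2 * m + (2 * m - i.+1)).+1%:R : F) = -1 * (i.+1)%:R.
  move=> i; apply/eqP; rewrite mulN1r -subr_eq0 opprK -natrD.
  rewrite -(dvdn_pcharf (pchar_Fp pP)).
  have -> : ((2 * m + (2 * m - i.+1)).+1 + i.+1 = p)%N.
    by have := ltn_ord i; rewrite pE; lia.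
  exact: dvdnn.
rewrite (eq_bigr _ (fun i _ => H i)) big_split /= prodr_const card_ord.
rewrite exprM sqrrN1 expr1n mul1r => E.
by exists w; rewrite expr2.
Qed.

Lemma two_pow m : p = (4 * m).+1 -> (2%:R : F) ^+ (2 * m) = (-1) ^+ m.
Proof.
move=> pE; have [w hw] := sqrtm1 m pE.
have E2 : (2%:R : F) = - w * (1 + w) ^+ 2 + (w ^+ 2 + 1) * (w + 2%:R) by ring.
rewrite hw addNr mul0r addr0 in E2.
have wnz : 1 + w != 0.
  apply/negP; rewrite addr_eq0 => /eqP ew.
  move: hw; rewrite -sqrrN -ew expr1n => /eqP; rewrite -subr_eq0 opprK => /eqP h2.
  by move: two_nz; rewrite -h2 /= eqxx.
rewrite E2 exprMn exprM sqrrN hw -exprM.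
have -> : (2 * (2 * m) = p.-1)%N by rewrite pE; lia.
by rewrite fermat // mulr1.
Qed.



Lemma case1 : (p %% 4 = 1)%N ->
     forall u : int, (p%:Z %| u * D - 1)%Z ->
       zsq_cong p (zsq_exp D (A_prod D p) (((p - 1) * (p - 3)) %/ 4))
                  (u ^+ ((p - 1) %/ 4), 0).
Proof.
move=> p4 u hu.
have pE : p = (4 * (p %/ 4)).+1 by have := divn_eq p 4; rewrite p4; lia.
move: pE; set m := (p %/ 4)%N => pE.
have [m' Em] : exists m', m = m'.+1.
  by case: m pE => [|m'] pE; [have := prime_gt1 pP; lia | exists m'].
have Ee : (((p - 1) * (p - 3)) %/ 4 = 2 * (m * (2 * m' + 1)))%N.
  have -> : ((p - 1) * (p - 3) = (2 * (m * (2 * m' + 1))) * 4)%N.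
    by rewrite [in LHS]pE Em; nia.
  by rewrite mulnK.
have Em4 : ((p - 1) %/ 4 = m)%N.
  have -> : (p - 1 = m * 4)%N by rewrite [in LHS]pE; lia.
  by rewrite mulnK.
apply: cong_phi; rewrite Ee phiA_pow phi_scal Em4; congr scalar_mx.
have hh : h = (2 * m)%N.
  rewrite /h pE (_ : (4 * m).+1 = (true + (2 * m).*2))%N ?half_bit_double //.
  by rewrite -muln2; lia.
have hd : (D%:~R : F) ^+ (2 * m'.+1) = -1 by have := cN1; rewrite /c hh Em.
have ht := two_pow m pE; rewrite Em in ht.
have hu' : (u%:~R : F) * D%:~R = 1.
  by apply/eqP; rewrite -subr_eq0 -intrM -(intrB _ _ 1) intr0P.
rewrite rmorphXn /= intrM Em.
have -> : ((4 : int)%:~R : F) = 2%:R * 2%:R by rewrite -natrM.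
exact: alg1.
Qed.

Lemma case2 : (p %% 4 = 3)%N ->
       zsq_cong p (zsq_exp D (A_prod D p) (((p - 1) * (p - 3)) %/ 4))
                  ((-1) ^+ ((p - 3) %/ 4), 0).
Proof.
move=> p4.
have pE : p = (4 * (p %/ 4) + 2).+1 by have := divn_eq p 4; rewrite p4; lia.
move: pE; set m := (p %/ 4)%N => pE.
have Ee : (((p - 1) * (p - 3)) %/ 4 = 2 * (m * (2 * m + 1)))%N.
  have -> : ((p - 1) * (p - 3) = (2 * (m * (2 * m + 1))) * 4)%N.
    by rewrite [in LHS]pE; nia.
  by rewrite mulnK.
have Em4 : ((p - 3) %/ 4 = m)%N.
  have -> : (p - 3 = m * 4)%N by rewrite [in LHS]pE; lia.
  by rewrite mulnK.
apply: cong_phi; rewrite Ee phiA_pow phi_scal Em4; congr scalar_mx.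
have hh : h = (2 * m + 1)%N.
  rewrite /h pE (_ : (4 * m + 2).+1 = (true + (2 * m + 1).*2))%N ?half_bit_double //.
  by rewrite -muln2; lia.
have hd : (D%:~R : F) ^+ (2 * m + 1) = -1 by have := cN1; rewrite /c hh.
have ht : (2%:R : F) ^+ (2 * (2 * m + 1)) = 1.
  have -> : (2 * (2 * m + 1) = p.-1)%N by rewrite [in RHS]pE; lia.
  exact: fermat two_nz.
rewrite rmorphXn /= rmorphN1 intrM.
have -> : ((4 : int)%:~R : F) = 2%:R * 2%:R by rewrite -natrM.
exact: alg2.
Qed.

End Main.

Theorem lemma2p1 (p : nat) (D : int) :
  prime p -> odd p ->
  (D %% 4)%Z = 3 ->
  (forall x : int, ~~ (p%:Z %| x ^+ 2 - D)%Z) ->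
  ((p %% 4 = 1)%N ->
     forall u : int, (p%:Z %| u * D - 1)%Z ->
       zsq_cong p (zsq_exp D (A_prod D p) (((p - 1) * (p - 3)) %/ 4))
                  (u ^+ ((p - 1) %/ 4), 0))
  /\
  ((p %% 4 = 3)%N ->
       zsq_cong p (zsq_exp D (A_prod D p) (((p - 1) * (p - 3)) %/ 4))
                  ((-1) ^+ ((p - 3) %/ 4), 0)).
Proof.
move=> pP podd _ nr; split.
  exact: case1.
exact: case2.
Qed.
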